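(* Let $n\geqslant 2$ be an integer. Then $(\mathbf{1})\alpha=\mathbf{1}$ for every isometry $\alpha$ of $\mathbb{N}^n$ onto itself, where $\mathbf{1}=(1,\ldots,1)$.
   Context: $\mathbb{N}=\{1,2,3,\ldots\}$ and $\mathbb{N}^n$ carries the Euclidean metric $d((x_1,\ldots,x_n),(y_1,\ldots,y_n))=\sqrt{\sum_{i=1}^n(x_i-y_i)^2}$. An isometry of $\mathbb{N}^n$ is a distance-preserving bijection $\mathbb{N}^n\to\mathbb{N}^n$; maps are written on the right of their arguments. *)

(* Defs.v *)
From mathcomp Require Import all_boot all_order all_algebra.
Set Implicit Arguments. Unset Strict Implicit. Unset Printing Implicit Defensive.
Import GRing.Theory Num.Theory.

Definition NN (n : nat) : Type := {t : n.-tuple nat | all (fun k => 0 < k)%N t}.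

Definition coord (n : nat) (x : NN n) (i : 'I_n) : nat := tnth (proj1_sig x) i.

Definition dist2 (n : nat) (x y : NN n) : int :=
  (\sum_(i < n) ((coord x i)%:Z - (coord y i)%:Z) ^+ 2)%R.

(* An isometry of N^n: a distance-preserving bijection N^n -> N^n.
   Since d = sqrt(dist2) and sqrt is injective on nonnegative reals,
   preserving d is the same as preserving dist2. *)
Definition isometryNn (n : nat) (a : NN n -> NN n) : Prop :=
  bijective a /\ forall x y : NN n, dist2 (a x) (a y) = dist2 x y.

Lemma all_one_pos (n : nat) : all (fun k => 0 < k)%N (nseq_tuple n 1%N).
Proof. by rewrite all_nseq orbT. Qed.

Definition one_pt (n : nat) : NN n := exist _ (nseq_tuple n 1%N) (all_one_pos n).

(* Main.v *)
Require Import Defs.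
From mathcomp Require Import all_boot all_order all_algebra.
From mathcomp Require Import zify.
Set Implicit Arguments. Unset Strict Implicit. Unset Printing Implicit Defensive.
Import GRing.Theory Num.Theory.
Local Open Scope ring_scope.
Local Notation coord := Defs.coord.

Lemma eq_NN n (x y : NN n) : (forall i, coord x i = coord y i) -> x = y.
Proof.
case: x => x Hx; case: y => y Hy /= H.
have e : x = y by apply: eq_from_tnth => i; exact: H i.
by subst y; rewrite (bool_irrelevance Hx Hy).
Qed.

Lemma coord_pos n (x : NN n) i : (0 < coord x i)%N.
Proof. exact: (allP (proj2_sig x)) _ (mem_tnth i _). Qed.

Lemma dist2C n (x y : NN n) : dist2 x y = dist2 y x.
Proof. by apply: eq_bigr => i _; rewrite -sqrrN opprB. Qed.

Lemma dist1 n (x z : NN n) : dist2 x z = 1 ->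
  exists i, (forall j, j != i -> coord x j = coord z j) /\
            ((coord x i)%:Z - (coord z i)%:Z) ^+ 2 = 1.
Proof.
rewrite /dist2 => H.
case: (pickP (fun i : 'I_n => (((coord x i)%:Z - (coord z i)%:Z)^+2 != 0))) => [i Hi|H0]; last first.
  rewrite big1 in H => // i _; by move: (H0 i) => /negbFE/eqP.
rewrite (bigD1 i) //= in H.
have Hr : 0 <= \sum_(j < n | j != i) ((coord x j)%:Z - (coord z j)%:Z) ^+ 2.
  by apply: sumr_ge0 => j _; rewrite sqr_ge0.
have H1 : 1 <= ((coord x i)%:Z - (coord z i)%:Z) ^+ 2.
  move: Hi; rewrite expr2; set d := (_ - _)%R; nia.
have Hr0 : \sum_(j < n | j != i) ((coord x j)%:Z - (coord z j)%:Z) ^+ 2 = 0 by move: H H1 Hr; set t := (_ ^+ 2); set r := (\sum_(_ < _ | _) _); clear; lia.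
exists i; split; last by rewrite Hr0 addr0 in H.
move=> j Hj; have := psumr_eq0P (fun j _ => sqr_ge0 _) Hr0 Hj.
by rewrite expr2 => /eqP; rewrite mulf_eq0 orbb subr_eq0 => /eqP; lia.
Qed.

Lemma dist_of n (x z : NN n) i0 : (forall j, j != i0 -> coord x j = coord z j) ->
  ((coord x i0)%:Z - (coord z i0)%:Z) ^+ 2 = 1 -> dist2 x z = 1.
Proof.
move=> H H0; rewrite /dist2 (bigD1 i0) //= big1 ?addr0 // => j Hj.
by rewrite H // subrr expr0n.
Qed.

Lemma coord_one n i : coord (one_pt n) i = 1%N.
Proof. by rewrite /Defs.coord /= tnth_nseq. Qed.

Definition mkNN n (h : 'I_n -> nat) (hp : forall i, (0 < h i)%N) : NN n :=
  exist _ [tuple h i | i < n] (introT all_tnthP (fun i => eq_ind_r (fun v => (0 < v)%N) (hp i) (tnth_mktuple h i))).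

Lemma coord_mk n h hp i : coord (@mkNN n h hp) i = h i.
Proof. by rewrite /Defs.coord /= tnth_mktuple. Qed.

Lemma sq1 (a b : nat) : (a = b + 1)%N \/ (b = a + 1)%N -> ((a%:Z - b%:Z) ^+ 2 = 1).
Proof.
case=> ->.
  by have -> : ((b + 1)%N%:Z - b%:Z) = 1 by lia.
by have -> : (a%:Z - (a + 1)%N%:Z) = -1 by lia; rewrite sqrrN expr1n.
Qed.

Lemma near_one n (z : NN n) : dist2 (one_pt n) z = 1 ->
  exists i, coord z i = 2%N /\ forall j, j != i -> coord z j = 1%N.
Proof.
move=> /dist1 [i [H1 H2]]; exists i; split.
  move: H2; rewrite coord_one expr2; have := coord_pos z i; nia.
by move=> j /H1; rewrite coord_one.
Qed.

Theorem corollary2p3 (n : nat) (hn : (2 <= n)%N) (a : NN n -> NN n) :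
  isometryNn a -> a (one_pt n) = one_pt n.
Proof.
move=> [[b ab ba] Hd]; set y := a (one_pt n).
case: (pickP (fun i => coord y i != 1%N)) => [j Hj|H0]; last first.
  apply: eq_NN => i; rewrite coord_one; by move: (H0 i) => /negbFE/eqP.
have Hj2 : (2 <= coord y j)%N by have := coord_pos y j; move: Hj => /eqP; lia.
pose h (k : 'I_n.+1) (i : 'I_n) :=
  (coord y i + (nat_of_ord k == nat_of_ord i) - ((nat_of_ord k == n) && (i == j)))%N.
have hp : forall k i, (0 < h k i)%N.
  move=> k i; rewrite /h; have := coord_pos y i.
  case E: ((nat_of_ord k == n) && (i == j)); last by case: (_ == _) => /=; lia.
  by move: E => /andP[_ /eqP ->]; case: (_ == _) => /=; lia.
pose f k := mkNN (hp k).
have Hf : forall k, dist2 (f k) y = 1.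
  move=> k; case: (ltnP k n) => Hk.
    apply: (@dist_of _ _ _ (Ordinal Hk)).
      move=> j0 Hj0; rewrite coord_mk /h.
      have -> : (nat_of_ord k == nat_of_ord j0) = false.
        by apply/negbTE; apply: contra Hj0 => /eqP e; apply/eqP/val_inj.
      have -> : (nat_of_ord k == n) = false by apply/negbTE; rewrite neq_ltn Hk.
      by rewrite addn0 subn0.
    rewrite coord_mk /h /= eqxx.
    have -> : (nat_of_ord k == n) = false by apply/negbTE; rewrite neq_ltn Hk.
    by apply: sq1; left; rewrite subn0.
  have Ekn : nat_of_ord k = n by have := ltn_ord k; lia.
  apply: (@dist_of _ _ _ j).
    move=> j0 Hj0; rewrite coord_mk /h Ekn.
    have -> : (n == nat_of_ord j0) = false by apply/negbTE; rewrite eq_sym neq_ltn ltn_ord.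
    by rewrite (negbTE Hj0) andbF addn0 subn0.
  rewrite coord_mk /h Ekn eqxx /=.
  have -> : (n == nat_of_ord j) = false by apply/negbTE; rewrite eq_sym neq_ltn ltn_ord.
  apply: sq1; right; rewrite ?eqxx /=; lia.
have Hb : forall k, dist2 (one_pt n) (b (f k)) = 1.
  by move=> k; rewrite -Hd ba dist2C Hf.
pose F k := odflt j [pick i | coord (b (f k)) i != 1%N].
have HF : forall k i, coord (b (f k)) i = 2%N -> (forall j, j != i -> coord (b (f k)) j = 1%N) -> F k = i.
  move=> k i Hi Ho; rewrite /F; case: pickP => [i' Hi'|Hn] /=.
    by apply/eqP; apply: contraNT Hi' => /Ho ->.
  by move: (Hn i); rewrite Hi.
have Finj : injective F.
  move=> k1 k2 E.
  have [i1 [Hi1 Ho1]] := near_one (Hb k1).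
  have [i2 [Hi2 Ho2]] := near_one (Hb k2).
  have e1 := HF _ _ Hi1 Ho1; have e2 := HF _ _ Hi2 Ho2.
  have ei : i1 = i2 by rewrite -e1 -e2.
  rewrite -ei in Hi2 Ho2.
  have eb : b (f k1) = b (f k2).
    apply: eq_NN => i; case: (eqVneq i i1) => [->|ne]; first by rewrite Hi1 Hi2.
    by rewrite Ho1 // Ho2.
  have ef : f k1 = f k2 by rewrite -[f k1]ba -[f k2]ba eb.
  have eh : forall i, h k1 i = h k2 i by move=> i; have := congr1 (fun z => coord z i) ef; rewrite /= !coord_mk.
  have key : forall k1 k2 : 'I_n.+1, (k1 < n)%N -> (forall i, h k1 i = h k2 i) -> k1 = k2.
    move=> c1 c2 Hc /(_ (Ordinal Hc)); rewrite /h /= eqxx.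
    have -> : (nat_of_ord c1 == n) = false by apply/negbTE; rewrite neq_ltn Hc.
    case: (eqVneq c2 c1) => [-> //|ne].
    have -> : (nat_of_ord c2 == nat_of_ord c1) = false by apply/negbTE: ne.
    rewrite /=; lia.
  case: (ltnP k1 n) => H1; first exact: key.
  case: (ltnP k2 n) => H2; first by apply/esym/key => // i; rewrite eh.
  apply: val_inj => /=; have := ltn_ord k1; have := ltn_ord k2; lia.
have := @leq_card _ _ F Finj; rewrite !card_ord => /leP; lia.
Qed.
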